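(* For any flats $A,B,C$ in a proaffine regular liner $X$: if $A$ is subparallel to $B$ and $B$ is subparallel to $C$, then $A$ is subparallel to $C$; and if $A\parallel B$ and $B\parallel C$, then $A\parallel C$.
   Context: A liner is a set $X$ of points with a family of subsets called lines such that any two distinct points lie in a unique line and every line contains at least two points. For distinct $x,y$, $\overline{xy}$ is the line through them and $\overline{xx}:=\{x\}$. A set is flat if it contains $\overline{xy}$ for all its distinct points; $\overline A$ is the smallest flat containing $A$. For $A\subseteq X$, $y\in X$ put $\overline{Ay}=\bigcup_{a\in A}\overline{ay}$. $X$ is proaffine if for all $o,x,y\in X$ and $p\in\overline{xy}\setminus\overline{ox}$ there exists $u\in\overline{oy}$ such that $\overline{vp}\cap\overline{ox}\ne\varnothing$ for every $v\in\overline{oy}\setminus\{u\}$. $X$ is regular if for every flat $A$ and points $a\in A$, $b\in X\setminus A$, $\overline{A\cup\{b\}}=\bigcup_{y\in\overline{ab}}\overline{Ay}$. A flat $A$ is subparallel to a flat $B$ if $A\subseteq\overline{\{a\}\cup B}$ for every $a\in A$; flats $A,B$ are parallel, $A\parallel B$, if $A$ is subparallel to $B$ and $B$ is subparallel to $A$. *)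

(* Defs.v *)
From Stdlib Require Import Classical.

Record liner := Liner {
  point :> Type;
  is_line : (point -> Prop) -> Prop;
  line_two_points : forall L, is_line L -> exists x y, x <> y /\ L x /\ L y;
  line_exists : forall x y : point, x <> y -> exists L, is_line L /\ L x /\ L y;
  line_unique : forall (x y : point) L M, x <> y ->
      is_line L -> L x -> L y -> is_line M -> M x -> M y ->
      forall z, L z <-> M z
}.

Section LinerDefs.
Variable X : liner.

Definition line_through (x y : X) : X -> Prop :=
  fun z => (x = y /\ z = x) \/
           (x <> y /\ exists L, is_line X L /\ L x /\ L y /\ L z).

Definition subset (A B : X -> Prop) : Prop := forall z, A z -> B z.

Definition flat (A : X -> Prop) : Prop :=
  forall x y, A x -> A y -> x <> y -> subset (line_through x y) A.

Definition hull (A : X -> Prop) : X -> Prop :=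
  fun z => forall F, flat F -> subset A F -> F z.

Definition cone (A : X -> Prop) (y : X) : X -> Prop :=
  fun z => exists a, A a /\ line_through a y z.

Definition proaffine : Prop :=
  forall o x y p : X, line_through x y p -> ~ line_through o x p ->
    exists u, line_through o y u /\
      forall v, line_through o y v -> v <> u ->
        exists w, line_through v p w /\ line_through o x w.

Definition regular : Prop :=
  forall (A : X -> Prop) (a b : X), flat A -> A a -> ~ A b ->
    forall z, hull (fun t => A t \/ t = b) z <->
              exists y, line_through a b y /\ cone A y z.

Definition subparallel (A B : X -> Prop) : Prop :=
  forall a, A a -> subset A (hull (fun t => t = a \/ B t)).

Definition parallel (A B : X -> Prop) : Prop :=
  subparallel A B /\ subparallel B A.

End LinerDefs.

(* Main.v *)
Require Import Defs.
From Stdlib Require Import Classical.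

Section Helpers.
Variable X : liner.
Notation col := (line_through X).

Lemma col_l (p q : X) : col p q p.
Proof.
  destruct (classic (p = q)) as [E|E].
  - left; split; auto.
  - right; split; auto. destruct (line_exists X p q E) as [L [HL [Hp Hq]]].
    exists L; auto.
Qed.

Lemma col_r (p q : X) : col p q q.
Proof.
  destruct (classic (p = q)) as [E|E].
  - left; split; auto.
  - right; split; auto. destruct (line_exists X p q E) as [L [HL [Hp Hq]]].
    exists L; auto.
Qed.

Lemma LS (p q r s : X) : r <> s -> col p q r -> col p q s ->
  forall z, col r s z <-> col p q z.
Proof.
  intros Hrs H1 H2 z.
  destruct H1 as [[Hpq Hr]|[Hpq [L1 [HL1 [H1p [H1q H1r]]]]]].
  { subst. destruct H2 as [[_ Hs]|[Hn _]]; [subst; tauto| tauto]. }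
  destruct H2 as [[Hpq' _]|[_ [L2 [HL2 [H2p [H2q H2s]]]]]]; [tauto|].
  assert (H1s : L1 s) by (apply (line_unique X p q L1 L2); auto).
  split.
  - intros [[E _]|[_ [L3 [HL3 [H3r [H3s H3z]]]]]]; [tauto|].
    assert (L1 z) by (apply (line_unique X r s L1 L3); auto).
    right; split; auto; exists L1; auto.
  - intros [[E _]|[_ [L4 [HL4 [H4p [H4q H4z]]]]]]; [tauto|].
    assert (L1 z) by (apply (line_unique X p q L1 L4); auto).
    right; split; auto; exists L1; auto.
Qed.

Lemma flat_col (F : X -> Prop) (p q z : X) : flat X F -> F p -> F q -> col p q z -> F z.
Proof.
  intros HF Hp Hq Hz. destruct (classic (p = q)) as [E|E].
  - subst. destruct Hz as [[_ E]|[E _]]; [subst; auto| tauto].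
  - exact (HF p q Hp Hq E z Hz).
Qed.

Lemma hull_incl (S T : X -> Prop) z : (forall t, S t -> T t) -> hull X S z -> hull X T z.
Proof. intros H Hz F HF HTF. apply Hz; auto. intros t Ht; apply HTF, H, Ht. Qed.

Lemma hull_min (S F : X -> Prop) z : flat X F -> (forall t, S t -> F t) -> hull X S z -> F z.
Proof. intros HF H Hz. apply Hz; auto. Qed.

Lemma hull_flat (S : X -> Prop) : flat X (hull X S).
Proof.
  intros x y Hx Hy Hne z Hz F HF HSF. apply (HF x y); auto; [apply Hx|apply Hy]; auto.
Qed.

Lemma flat_single (a : X) : flat X (fun t => t = a).
Proof. intros x y Hx Hy Hne. subst. tauto. Qed.

Lemma main (A B C : X -> Prop) (a x : X) :
  proaffine X -> regular X -> flat X A -> flat X B -> flat X C ->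
  subparallel X A B -> subparallel X B C -> A a -> C a -> A x -> C x.
Proof.
  intros Hpa Hreg FA FB FC SAB SBC Aa Ca Ax.
  destruct (classic (B a)) as [Ba|nBa].
  { assert (Bx : B x).
    { apply (hull_min (fun t => t = a \/ B t) B x FB); [intros t [->|Ht]; auto|]. apply (SAB a Aa x Ax). }
    apply (hull_min (fun t => t = a \/ C t) C x FC); [intros t [->|Ht]; auto|]. apply (SBC a Ba x Bx). }
  destruct (classic (exists b', B b' /\ C b')) as [[b' [Bb' Cb']]|nBC].
  { assert (BC : forall t, B t -> C t).
    { intros t Bt. apply (hull_min (fun s => s = b' \/ C s) C t FC); [intros s [->|Hs]; auto|].
      apply (SBC b' Bb' t Bt). }
    apply (hull_min (fun t => t = a \/ B t) C x FC); [intros t [->|Ht]; auto|]. apply (SAB a Aa x Ax). }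
  destruct (classic (exists b, B b)) as [[b Bb]|nB].
  2:{ assert (x = a).
      { apply (hull_min (fun t => t = a \/ B t) (fun t => t = a) x (flat_single a));
          [intros t [->|Ht]; [auto| exfalso; eauto]|]. apply (SAB a Aa x Ax). }
      subst; auto. }
  destruct (classic (x = a)) as [->|xa]; [auto|].
  assert (AB : forall t, A t -> B t -> False).
  { intros t At Bt. apply nBa. apply (hull_min (fun s => s = t \/ B s) B a FB); [intros s [->|Hs]; auto|].
    apply (SAB t At a Aa). }
  assert (CB : forall t, C t -> B t -> False) by (intros t Ct Bt; apply nBC; eauto).
  assert (ab : a <> b) by (intro E; subst; tauto).
  assert (Hx : hull X (fun t => B t \/ t = a) x).
  { apply (hull_incl (fun t => t = a \/ B t)); [intros t [H|H]; auto|].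
    apply (SAB a Aa x Ax). }
  apply (proj1 (Hreg B b a FB Bb nBa x)) in Hx.
  destruct Hx as [y0 [Hy0 [b1 [Bb1 Hx]]]].
  assert (Hb1 : hull X (fun t => C t \/ t = b) b1).
  { apply (hull_incl (fun t => t = b \/ C t)); [intros t [H|H]; auto|].
    apply (SBC b Bb b1 Bb1). }
  assert (nCb : ~ C b) by (intro; eauto).
  apply (proj1 (Hreg C a b FC Ca nCb b1)) in Hb1.
  destruct Hb1 as [z [Hz [c1 [Cc1 Hc1]]]].
  assert (inA : forall p q t, A p -> A q -> col p q t -> A t)
    by (intros p q t Hp Hq Ht; exact (flat_col A p q t FA Hp Hq Ht)).
  assert (inB : forall p q t, B p -> B q -> col p q t -> B t)
    by (intros p q t Hp Hq Ht; exact (flat_col B p q t FB Hp Hq Ht)).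
  assert (inC : forall p q t, C p -> C q -> col p q t -> C t)
    by (intros p q t Hp Hq Ht; exact (flat_col C p q t FC Hp Hq Ht)).
  assert (y0b : y0 <> b).
  { intro E; subst. apply (AB x); auto. apply (inB b1 b x); auto. }
  assert (b1b : b1 <> b).
  { intro E; subst.
    assert (col b a x) by (apply (proj1 (LS b a b y0 (not_eq_sym y0b) (col_l _ _) Hy0 x)); auto).
    assert (col a x b) by (apply (proj2 (LS b a a x (not_eq_sym xa) (col_r _ _) H b)); apply col_l).
    apply (AB b); auto. apply (inA a x b); auto. }
  assert (y0a : y0 <> a).
  { intro E; subst.
    assert (col a x b1) by (apply (proj2 (LS b1 a a x (not_eq_sym xa) (col_r _ _) Hx b1)); apply col_l).
    apply (AB b1); auto. apply (inA a x b1); auto. }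
  assert (nBy0 : ~ B y0).
  { intro By0. apply nBa.
    apply (inB b y0 a); auto.
    apply (proj2 (LS b a b y0 (not_eq_sym y0b) (col_l _ _) Hy0 a)); apply col_r. }
  assert (xy0 : x <> y0).
  { intro E; subst.
    assert (col a y0 b) by (apply (proj2 (LS b a a y0 (not_eq_sym y0a) (col_r _ _) Hy0 b)); apply col_l).
    apply (AB b); auto. apply (inA a y0 b); auto. }
  assert (Hab_y0 : col a b y0) by
    (apply (proj2 (LS b a a b ab (col_r _ _) (col_l _ _) y0)); auto).
  assert (P1 : col x y0 b1).
  { apply (proj2 (LS b1 y0 x y0 xy0 Hx (col_r _ _) b1)); apply col_l. }
  assert (nP1 : ~ col a x b1) by (intro H; apply (AB b1); eauto).
  destruct (Hpa a x y0 b1 P1 nP1) as [u [Hu H1]].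
  assert (Hby : col a y0 b).
  { apply (proj2 (LS a b a y0 (not_eq_sym y0a) (col_l _ _) Hab_y0 b)); apply col_r. }
  assert (ub : u = b).
  { apply NNPP; intro ne. destruct (H1 b Hby (not_eq_sym ne)) as [w [Hw1 Hw2]].
    apply (AB w); eauto. }
  subst u.
  assert (zb : z <> b).
  { intro E; subst.
    assert (c1b : c1 <> b) by (intro E; subst; tauto).
    assert (col b b1 c1) by
      (apply (proj2 (LS c1 b b b1 (not_eq_sym b1b) (col_r _ _) Hc1 c1)); apply col_l).
    apply (CB c1); eauto. }
  assert (Hzy : col a y0 z).
  { apply (proj2 (LS a b a y0 (not_eq_sym y0a) (col_l _ _) Hab_y0 z)); auto. }
  destruct (H1 z Hzy zb) as [w [Hw1 Hw2]].
  assert (Aw : A w) by eauto.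
  assert (zb1 : z <> b1).
  { intro E; subst. apply nBa. apply (inB b b1 a); auto.
    apply (proj2 (LS a b b b1 (not_eq_sym b1b) (col_r _ _) Hz a)); apply col_l. }
  assert (P2 : col b z a).
  { apply (proj2 (LS a b b z (not_eq_sym zb) (col_r _ _) Hz a)); apply col_l. }
  assert (nP2 : ~ col b1 b a) by (intro H; apply nBa; eauto).
  destruct (Hpa b1 b z a P2 nP2) as [u [Hu2 H2]].
  assert (Hw : col b1 z w).
  { apply (proj2 (LS z b1 b1 z (not_eq_sym zb1) (col_r _ _) (col_l _ _) w)); auto. }
  assert (wu : w = u).
  { apply NNPP; intro ne. destruct (H2 w Hw ne) as [w2 [Hw21 Hw22]].
    apply (AB w2); eauto. }
  assert (c1b1 : c1 <> b1) by (intro E; subst; eauto).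
  assert (Hc1' : col b1 z c1).
  { apply (proj2 (LS c1 z b1 z (not_eq_sym zb1) Hc1 (col_r _ _) c1)); apply col_l. }
  assert (cu : c1 = u).
  { apply NNPP; intro ne. destruct (H2 c1 Hc1' ne) as [w2 [Hw21 Hw22]].
    apply (CB w2); eauto. }
  subst u. subst w.
  destruct (classic (c1 = a)) as [E|ca].
  { subst c1. exfalso.
    assert (za : z <> a).
    { intro E; subst. destruct Hc1 as [[_ E]|[E _]]; [subst; tauto|tauto]. }
    assert (col a b b1) by (apply (proj1 (LS a b a z (not_eq_sym za) (col_l _ _) Hz b1)); auto).
    apply nBa. apply (inB b b1 a); auto.
    apply (proj2 (LS a b b b1 (not_eq_sym b1b) (col_r _ _) H a)); apply col_l. }
  apply (inC a c1 x); auto.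
  apply (proj2 (LS a x a c1 (not_eq_sym ca) (col_l _ _) Hw2 x)); apply col_r.
Qed.

Lemma sub_trans (A B C : X -> Prop) :
  proaffine X -> regular X -> flat X A -> flat X B -> flat X C ->
  subparallel X A B -> subparallel X B C -> subparallel X A C.
Proof.
  intros Hpa Hreg FA FB FC SAB SBC a Aa x Ax.
  set (C' := hull X (fun t => t = a \/ C t)).
  apply (main A B C' a x); auto.
  - apply hull_flat.
  - intros b Bb t Bt. apply (hull_incl (fun s => s = b \/ C s)).
    + intros s [H|H]; [left; auto| right]. intros F HF HS. apply HS; auto.
    + apply (SBC b Bb t Bt).
  - intros F HF HS. apply HS; auto.
Qed.

End Helpers.

Theorem theorem6p5p4 (X : liner) (A B C : X -> Prop) :
  proaffine X -> regular X -> flat X A -> flat X B -> flat X C ->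
  (subparallel X A B -> subparallel X B C -> subparallel X A C) /\
  (parallel X A B -> parallel X B C -> parallel X A C).
Proof.
  intros Hpa Hreg FA FB FC. split.
  - intros H1 H2; exact (sub_trans X A B C Hpa Hreg FA FB FC H1 H2).
  - intros [H1 H2] [H3 H4]. split.
    + exact (sub_trans X A B C Hpa Hreg FA FB FC H1 H3).
    + exact (sub_trans X C B A Hpa Hreg FC FB FA H4 H2).
Qed.
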